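(* $W'_{\mathrm{tw}}(C_4)=4$.
   Context: Graphs are finite simple graphs; $C_4$ is the cycle on 4 vertices. A graph is 2-connected if it has more than 2 vertices, is connected, and remains connected after removal of any single vertex. We use first-order logic of graphs with relation symbols for adjacency and equality only; the variable width of a sentence is the number of distinct variables it uses. For a graph $F$, $W'_{\mathrm{tw}}(F)$ is the minimum $m$ for which there are a first-order sentence $\Phi$ of variable width $m$ and an integer $k$ such that for every 2-connected graph $G$ of treewidth at least $k$, $G\models\Phi$ if and only if $G$ contains a (not necessarily induced) subgraph isomorphic to $F$. *)

(* Defs.v *)
From mathcomp Require Import all_boot.
Set Implicit Arguments. Unset Strict Implicit. Unset Printing Implicit Defensive.

Record sgraph := SGraph {
  vertex :> finType;
  adj : rel vertex;
  adj_sym : symmetric adj;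
  adj_irrefl : irreflexive adj }.

Definition C4_adj : rel 'I_4 :=
  fun i j => (j == (i.+1 %% 4) :> nat) || (i == (j.+1 %% 4) :> nat).
Lemma C4_sym : symmetric C4_adj.
Proof. by move=> i j; rewrite /C4_adj orbC. Qed.
Lemma C4_irrefl : irreflexive C4_adj.
Proof. by move=> [[|[|[|[|n]]]] Hn]. Qed.
Definition C4 : sgraph := @SGraph 'I_4 C4_adj C4_sym C4_irrefl.

Definition contains_subgraph (G F : sgraph) : Prop :=
  exists f : F -> G, injective f /\ forall u v, adj u v -> adj (f u) (f v).

Definition connected_in (T : finType) (e : rel T) (S : {set T}) : Prop :=
  {in S &, forall x y,
     connect (fun a b => [&& e a b, a \in S & b \in S]) x y}.

Definition connected_graph (G : sgraph) : Prop := connected_in (@adj G) [set: G].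

Definition two_connected (G : sgraph) : Prop :=
  [/\ 2 < #|G|, connected_graph G &
      forall v : G, connected_in (@adj G) ([set: G] :\ v)].

Record tree := Tree {
  tnode :> finType;
  tedge : rel tnode;
  tedge_sym : symmetric tedge;
  tedge_irrefl : irreflexive tedge;
  tree_connected : connected_in tedge [set: tnode];
  tree_acyclic : ~ exists c : seq tnode, [/\ 2 < size c, uniq c & cycle tedge c] }.

Record tree_decomposition (G : sgraph) := TreeDec {
  td_tree : tree;
  bag : td_tree -> {set G};
  td_vertex : forall v : G, exists t, v \in bag t;
  td_edge : forall u v : G, adj u v -> exists t, (u \in bag t) && (v \in bag t);
  td_conn : forall v : G, connected_in (@tedge td_tree) [set t | v \in bag t] }.

(* width of a decomposition = (max bag size) - 1; treewidth = min width.
   "treewidth at least k" <-> every tree decomposition has a bag of size > k. *)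
Definition tw_at_least (G : sgraph) (k : nat) : Prop :=
  forall D : tree_decomposition G, exists t : td_tree D, k < #|@bag G D t|.

Inductive formula :=
  | FAdj of nat & nat
  | FEq of nat & nat
  | FTrue
  | FFalse
  | FNot of formula
  | FAnd of formula & formula
  | FOr of formula & formula
  | FImp of formula & formula
  | FExists of nat & formula
  | FForall of nat & formula.

Fixpoint vars (f : formula) : seq nat :=
  match f with
  | FAdj x y | FEq x y => [:: x; y]
  | FTrue | FFalse => [::]
  | FNot g => vars g
  | FAnd g h | FOr g h | FImp g h => vars g ++ vars h
  | FExists x g | FForall x g => x :: vars g
  end.

Fixpoint free_vars (f : formula) : seq nat :=
  match f with
  | FAdj x y | FEq x y => [:: x; y]
  | FTrue | FFalse => [::]
  | FNot g => free_vars g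
  | FAnd g h | FOr g h | FImp g h => free_vars g ++ free_vars h
  | FExists x g | FForall x g => filter (predC1 x) (free_vars g)
  end.

Definition sentence (f : formula) : Prop := free_vars f = [::].

Definition var_width (f : formula) : nat := size (undup (vars f)).

Definition upd (V : Type) (env : nat -> V) (x : nat) (v : V) : nat -> V :=
  fun y => if y == x then v else env y.

Fixpoint holds (G : sgraph) (env : nat -> G) (f : formula) : Prop :=
  match f with
  | FAdj x y => adj (env x) (env y)
  | FEq x y => env x = env y
  | FTrue => True
  | FFalse => False
  | FNot g => ~ holds env g
  | FAnd g h => holds env g /\ holds env h
  | FOr g h => holds env g \/ holds env h
  | FImp g h => holds env g -> holds env h
  | FExists x g => exists v : G, holds (upd env x v) g
  | FForall x g => forall v : G, holds (upd env x v) g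
  end.

(* G |= Phi for a sentence Phi (the assignment is irrelevant for sentences;
   all graphs considered below are nonempty). *)
Definition models (G : sgraph) (f : formula) : Prop :=
  forall env : nat -> G, holds env f.

Definition defines_on_tw (F : sgraph) (Phi : formula) (k : nat) : Prop :=
  forall G : sgraph, two_connected G -> tw_at_least G k ->
    (models G Phi <-> contains_subgraph G F).

Definition admissible_width (F : sgraph) (m : nat) : Prop :=
  exists Phi k, [/\ sentence Phi, var_width Phi = m & defines_on_tw F Phi k].

Definition W'tw_eq (F : sgraph) (m : nat) : Prop :=
  admissible_width F m /\ forall m', admissible_width F m' -> m <= m'.

(* Main.v *)
Require Import Defs.
From mathcomp Require Import all_boot all_algebra.
From mathcomp Require Import ring zify.
Set Implicit Arguments. Unset Strict Implicit. Unset Printing Implicit Defensive.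

Section TreeLemmas.
Variable T : finType.
Variable e : rel T.
Hypothesis esym : symmetric e.
Hypothesis eirr : irreflexive e.

Definition rin (S : {set T}) := fun a b => [&& e a b, a \in S & b \in S].



Lemma rin_sub S x p : path (rin S) x p -> {subset p <= S}.
Proof.
elim: p x => [|y p IH] x //= /andP[/and3P[_ _ yS] pp] z.
by rewrite inE => /orP[/eqP ->//|]; apply: IH pp z.
Qed.

Lemma leaf_remove (S : {set T}) (l : T) :
  (forall a b, a \in S -> b \in S -> e l a -> e l b -> a = b) ->
  connected_in e S -> connected_in e (S :\ l).
Proof.
move=> un conS x y; rewrite !inE => /andP[xl xS] /andP[yl yS].
case/connectP: (conS x y xS yS) => p pp ey.
move: yl; rewrite ey.
case: (shortenP pp) => p' pp' up' _ yl.
have lp : l \notin p'.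
  apply/negP=> lin.
  move: yl pp' up'; case/splitPr: lin => p1 p2.
  case: p2 => [|z p3].
    by rewrite last_cat /= eqxx.
  move=> _; rewrite cat_path /= => /andP[_ /andP[/and3P[e1 h1 h2] /andP[/and3P[e2 h3 h4] _]]].
  have := un _ _ h1 h4 _ e2; rewrite esym e1 => /(_ isT) E.
  move=> U; have U' : uniq ((x :: p1) ++ [:: l, z & p3]) by [].
  move: U'; rewrite cat_uniq => /and3P[_ /hasPn H _].
  by have := H z; rewrite !inE eqxx !orbT => /(_ isT) /negP; apply; rewrite -E; exact: mem_last.
apply/connectP; exists p' => //.
apply: (@sub_in_path _ [pred z | z != l]) pp'.
  move=> a b; rewrite !inE => al bl /and3P[eab aS bS]; by rewrite eab al bl aS bS.
by rewrite /= xl; apply/allP => z zp /=; apply/eqP => E; rewrite -E zp in lp.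
Qed.

Definition acyclic := ~ exists c : seq T, [/\ 2 < size c, uniq c & cycle e c].

Lemma leaf_ind (U : {set T}) : acyclic ->
  forall n x p, path (rin U) x p -> uniq (x :: p) -> x \in U -> p != [::] ->
  #|U| - size p <= n ->
  exists l q, [/\ l \in U, q \in U, e l q & forall s, s \in U -> e l s -> s = q].
Proof.
move=> acy; elim=> [|n IH] x p pp up xU pn hn.
-
  exfalso.
  have : size (x :: p) <= #|U|.
    move/card_uniqP: (up) => <-; apply: subset_leq_card; apply/subsetP => z.
    rewrite inE => /orP[/eqP -> //|]; exact: rin_sub pp z.
  by rewrite /=; move: hn; rewrite leqn0 subn_eq0 => h1 h2; have := leq_trans h2 h1; rewrite ltnn.
- case: (boolP [exists w, rin U w x && (w \notin x :: p)]).
    case/existsP => w /andP[rw wn].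
    apply: (IH w (x :: p)) => //=.
    + by rewrite rw pp.
    + by move: wn up; rewrite /= => -> /andP[-> ->].
    + by case/and3P: rw.
    + by move: hn => /=; rewrite subnS; case: (#|U| - size p) => [|k].
  move=> /existsPn H.
  case: p pp up pn H {hn} => [//|q p'] pp up _ H.
  exists x, q; case/andP: pp => /and3P[exq _ qU] pp'.
  split => // s sU exs.
  have := H s; rewrite /rin esym exs sU xU /= negbK.
  rewrite !inE => /orP[/eqP sx|/orP[/eqP //|sp']].
    by rewrite sx eirr in exs.
  exfalso; apply: acy.
  move: pp' up; case/splitPr: sp' => p1 p2 pp up.
  exists (x :: q :: rcons p1 s); split.
  + by rewrite /= size_rcons; case: p1 {pp up} => [|? ?] //=; move: up; rewrite /= !inE => /andP[/norP[_ /norP[/negP]]] //.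
  + by move: up; rewrite -cat_rcons -!cat_cons cat_uniq => /andP[].
  + rewrite /cycle rcons_cons /= exq /= rcons_path last_rcons (esym s x) exs andbT rcons_path.
    have pp0 : path (rin U) q (p1 ++ s :: p2) := pp.
    move: pp0; rewrite cat_path /= => /andP[pp1 /andP[r1 _]].
    apply/andP; split; first by apply: sub_path pp1 => a b /and3P[].
    by case/and3P: r1.
Qed.

Lemma tw_key (G : sgraph) (bag : T -> {set G}) (v0 : G) : acyclic ->
 forall n (U : {set T}), #|U| <= n -> U != set0 -> connected_in e U ->
 (forall v, exists2 t, t \in U & v \in bag t) ->
 (forall u v, adj u v -> exists2 t, t \in U & (u \in bag t) && (v \in bag t)) ->
 (forall v, connected_in e (U :&: [set t | v \in bag t])) ->
 exists t v, [/\ t \in U, v \in bag t & forall u, adj v u -> u \in bag t].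
Proof.
move=> acy; elim=> [|n IH] U hU U0 conU hv he hc.
  by move: U0; rewrite -card_gt0 => /leq_trans/(_ hU).
case: (leqP #|U| 1) => hU1.
  case/set0Pn: U0 => t0 t0U.
  have all1 : forall t, t \in U -> t = t0.
    by move=> t tU; move/card_le1_eqP: hU1 => /(_ t t0 tU t0U).
  have allb : forall v, v \in bag t0.
    by move=> v; case: (hv v) => t /all1 ->.
  by exists t0, v0; split.
have [l [q [lU qU elq lq]]] : exists l q, [/\ l \in U, q \in U, e l q & forall s, s \in U -> e l s -> s = q].
  case/set0Pn: U0 => a aU.
  have : U :\ a != set0.
    by rewrite -card_gt0; move: hU1; rewrite (cardsD1 a U) aU add1n ltnS.
  case/set0Pn => b; rewrite !inE => /andP[ba bU].
  case/connectP: (conU a b aU bU) => p pp eb.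
  move: ba; rewrite eb; case: (shortenP pp) => p' pp' up' _ ba.
  apply: (@leaf_ind U acy #|U| a p') => //.
    by apply/eqP => p0; rewrite p0 /= eqxx in ba.
  exact: leq_subr.
have ql : q != l by apply/eqP => E; rewrite E eirr in elq.
have un : forall a b, a \in U -> b \in U -> e l a -> e l b -> a = b.
  by move=> a b aU bU ea eb; rewrite (lq a aU ea) (lq b bU eb).
case: (boolP (bag l \subset bag q)) => [sub|].
  have [t [v [tU vt hn]]] : exists t v, [/\ t \in U :\ l, v \in bag t & forall u, adj v u -> u \in bag t].
    apply: (IH (U :\ l)).
    - by move: hU; rewrite (cardsD1 l U) lU add1n ltnS.
    - by apply/set0Pn; exists q; rewrite !inE ql qU.
    - exact: leaf_remove un conU.
    - move=> v; case: (hv v) => t tU vt.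
      case: (eqVneq t l) => [tl|tl]; last by exists t; rewrite // !inE tl tU.
      by exists q; rewrite ?inE ?ql ?qU //; apply: (subsetP sub); rewrite -tl.
    - move=> u v uv; case: (he u v uv) => t tU /andP[ut vt].
      case: (eqVneq t l) => [tl|tl]; last by exists t; rewrite ?inE ?tl ?tU ?ut.
      exists q; first by rewrite !inE ql qU.
      by rewrite tl in ut vt; rewrite !(subsetP sub).
    - move=> v; rewrite setIDAC; apply: leaf_remove; last exact: hc.
      by move=> a b; rewrite !inE => /andP[aU _] /andP[bU _]; apply: un.
  by exists t, v; split => //; move: tU; rewrite !inE => /andP[].
case/subsetPn => v vl vq.
have only : forall t, t \in U -> v \in bag t -> t = l.
  move=> t tU vt; apply/eqP; apply/negPn/negP => tl.
  have := hc v l t; rewrite !inE lU vl tU vt => /(_ isT isT).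
  case/connectP => p pp et; case: p pp et => [|s p] /=.
    by move=> _ et; rewrite et eqxx in tl.
  move=> /andP[/and3P[els _ sin] _] _.
  move: sin; rewrite !inE => /andP[sU sv].
  by move: vq; rewrite -(lq s sU els) sv.
exists l, v; split => // u avu.
case: (he v u avu) => t tU /andP[vt ut].
by rewrite -(only t tU vt).
Qed.
End TreeLemmas.

Lemma tw_from_deg (G : sgraph) (k : nat) (v0 : G) :
  (forall v : G, k <= #|[set u | adj v u]|) -> tw_at_least G k.
Proof.
move=> hdeg D.
have [t0 _] := @td_vertex G D v0.
have [t [v [_ vt hn]]] : exists t v, [/\ t \in [set: td_tree D], v \in @bag G D t & forall u, adj v u -> u \in @bag G D t].
  apply: (@tw_key (td_tree D) (@tedge _) (@tedge_sym _) (@tedge_irrefl _)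
    G (@bag G D) v0 (@tree_acyclic _) #|[set: td_tree D]| setT (leqnn _)).
  - by apply/set0Pn; exists t0.
  - exact: tree_connected.
  - by move=> v; case: (@td_vertex G D v) => t h; exists t.
  - by move=> u v h; case: (@td_edge G D _ _ h) => t h'; exists t.
  - by move=> v; rewrite setTI; apply: td_conn.
exists t.
have sub : v |: [set u | adj v u] \subset @bag G D t.
  apply/subsetP => u; rewrite !inE => /orP[/eqP -> //|]; exact: hn.
apply: leq_trans (subset_leq_card sub).
rewrite cardsU1 inE (@adj_irrefl G v) /= add1n ltnS; exact: hdeg.
Qed.



Record bstr := BStr {
  bP : finType;
  binc : rel bP;
  binc_sym : symmetric binc;
  bE1 : forall a1 a2 : bP, a1 != a2 -> forall e1 e2 : bool,
          exists b, binc a1 b = e1 /\ binc a2 b = e2;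
  bE3 : forall (a b : bP) (e : bool), exists a', a' != a /\ binc a' b = e;
  bP0 : bP }.

Section Graph.
Variable S : bstr.
Definition gadj (u v : bool * bP S) := (u.1 != v.1) && binc u.2 v.2.
Lemma gadj_sym : symmetric gadj.
Proof. by move=> u v; rewrite /gadj eq_sym binc_sym. Qed.
Lemma gadj_irr : irreflexive gadj.
Proof. by move=> u; rewrite /gadj eqxx. Qed.
Definition gr : sgraph := @SGraph (bool * bP S)%type gadj gadj_sym gadj_irr.

Lemma avoid2 (x y : bP S) : exists z, z != x /\ z != y.
Proof.
case: (eqVneq x y) => [<-|xy].
  by case: (bE3 x x true) => z [zx _]; exists z.
case: (bE1 xy true true) => w [xw yw].
case: (bE3 x w false) => z [zx zw]; exists z; split => //.
by apply/eqP => E; rewrite E yw in zw.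
Qed.
End Graph.

Definition tmatch (S1 S2 : bstr) (u v : gr S1) (u' v' : gr S2) :=
  [/\ u.1 = u'.1, (u == v) = (u' == v') & gadj u v = gadj u' v'].

Lemma tmatch_swap S1 S2 (u v : gr S1) (u' v' : gr S2) :
  tmatch u v u' v' -> tmatch u' v' u v.
Proof. by case=> *; split. Qed.

Lemma tmatch_refl S1 S2 (u : gr S1) (u' : gr S2) : u.1 = u'.1 -> tmatch u u u' u'.
Proof. by move=> h; split; rewrite ?eqxx ?gadj_irr. Qed.

Lemma tmatch_side S1 S2 (u v : gr S1) (u' v' : gr S2) : tmatch u v u' v' -> u.1 = u'.1.
Proof. by case. Qed.

Lemma ext_core S1 S2 (a1 a2 c : gr S1) (b1 b2 : gr S2) :
  tmatch a1 a2 b1 b2 -> a2.1 = b2.1 ->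
  exists d : gr S2, tmatch c a1 d b1 /\ tmatch c a2 d b2.
Proof.
move=> hm h2.
case: (eqVneq c a1) => [->|ca1].
  by exists b1; split => //; apply: tmatch_refl; case: hm.
case: (eqVneq c a2) => [->|ca2].
  exists b2; split; last exact: tmatch_refl.
  case: hm => h1 he ha; split => //; first by rewrite eq_sym he eq_sym.
  by rewrite gadj_sym ha gadj_sym.
move: c a1 a2 b1 b2 hm h2 ca1 ca2 => [s x] [s1 y1] [s2 y2] [t1 z1] [t2 z2].
case=> /= e1' he ha /= e2' ca1 ca2; subst t1 t2.
have [z [hz1 hz2 hz3 hz4]] : exists z, [/\ s1 = s -> z != z1, s1 != s -> binc z z1 = binc x y1,
   s2 = s -> z != z2 & s2 != s -> binc z z2 = binc x y2].
  case: (boolP (s1 == s)) => [/eqP e1|n1]; case: (boolP (s2 == s)) => [/eqP e2|n2].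
  - case: (avoid2 z1 z2) => z [zz1 zz2]; exists z; split => [h|h|h|h]; try by [].
  - case: (bE3 z1 z2 (binc x y2)) => z [zz1 zb]; exists z; split => [h|h|h|h]; try by [].
    by rewrite h eqxx in n2.
  - case: (bE3 z2 z1 (binc x y1)) => z [zz2 zb]; exists z; split => [h|h|h|h]; try by [].
    by rewrite h eqxx in n1.
  - have s12 : s1 = s2 by move: n1 n2; case: (s1); case: (s2); case: (s).
    subst s2.
    have [z [zb1 zb2]] : exists z, binc z z1 = binc x y1 /\ binc z z2 = binc x y2.
      case: (eqVneq y1 y2) => [ey|ny].
        subst y2; move: he; rewrite !xpair_eqE !eqxx /= => /esym/eqP ->.
        by case: (bE3 z2 z2 (binc x y1)) => z [_ zb]; exists z.
      have nz : z1 != z2 by move: he; rewrite !xpair_eqE !eqxx (negbTE ny) /=; move/esym/negbT.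
      case: (bE1 nz (binc x y1) (binc x y2)) => z [h1 h2']; exists z.
      by rewrite !(binc_sym z).
    by exists z; split => // E; rewrite E eqxx in n1.
have fin : forall si yi zi, (s, x) != (si, yi) -> (si = s -> z != zi) ->
   (si != s -> binc z zi = binc x yi) -> tmatch (s, x) (si, yi) (s, z) (si, zi).
  move=> si yi zi ca h1 h2; split => //.
    rewrite (negbTE ca); apply/esym/negbTE; rewrite xpair_eqE.
    by case: (eqVneq s si) => [E|] //=; apply: h1; rewrite E.
  rewrite /gadj /=; case: (eqVneq s si) => [E|n] //=.
  by rewrite h2 // eq_sym.
by exists (s, z); split; apply: fin.
Qed.

Definition Rel (S1 S2 : bstr) (L : seq nat) (e1 : nat -> gr S1) (e2 : nat -> gr S2) :=
  forall x y, x \in L -> y \in L -> tmatch (e1 x) (e1 y) (e2 x) (e2 y).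

Lemma Rel_sym S1 S2 L e1 e2 : @Rel S1 S2 L e1 e2 -> Rel L e2 e1.
Proof. by move=> h x y xL yL; apply: tmatch_swap; apply: h. Qed.

Lemma Rel_sub S1 S2 L L' e1 e2 : {subset L' <= L} -> @Rel S1 S2 L e1 e2 -> Rel L' e1 e2.
Proof. by move=> s h x y xL yL; apply: h; apply: s. Qed.

Lemma ext_list S1 S2 (L : seq nat) (e1 : nat -> gr S1) (e2 : nat -> gr S2) :
  size (undup L) <= 2 -> Rel L e1 e2 -> forall c : gr S1,
  exists d : gr S2, c.1 = d.1 /\ forall y, y \in L -> tmatch c (e1 y) d (e2 y).
Proof.
move=> hs hR c.
have mL : forall y, (y \in L) = (y \in undup L) by move=> y; rewrite mem_undup.
move: hs; case E: (undup L) => [|y [|z [|w r]]] //= _.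
- by exists (c.1, bP0 S2); split => // y; rewrite mL E.
- have yL : y \in L by rewrite mL E inE.
  have [d [h1 _]] := ext_core c (hR y y yL yL) (tmatch_side (hR y y yL yL)).
  exists d; split; first by case: h1.
  by move=> y'; rewrite mL E inE => /eqP ->.
- have yL : y \in L by rewrite mL E !inE eqxx.
  have zL : z \in L by rewrite mL E !inE eqxx orbT.
  have [d [h1 h2]] := ext_core c (hR y z yL zL) (tmatch_side (hR z z zL zL)).
  exists d; split; first by case: h1.
  by move=> y'; rewrite mL E !inE => /orP[] /eqP ->.
Qed.

Lemma free_sub f : {subset free_vars f <= vars f}.
Proof.
elim: f => [x y|x y|||g IH|g IHg h IHh|g IHg h IHh|g IHg h IHh|x g IH|x g IH] z //=;
  try by rewrite !mem_cat => /orP[/IHg|/IHh] ->; rewrite ?orbT.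
- exact: IH.
- by rewrite mem_filter => /andP[_ /IH] H; rewrite inE H orbT.
- by rewrite mem_filter => /andP[_ /IH] H; rewrite inE H orbT.
Qed.

Lemma Rel_upd S1 S2 L0 x e1 e2 (c : gr S1) (d : gr S2) :
  Rel (filter (predC1 x) L0) e1 e2 -> c.1 = d.1 ->
  (forall y, y \in filter (predC1 x) L0 -> tmatch c (e1 y) d (e2 y)) ->
  Rel L0 (upd e1 x c) (upd e2 x d).
Proof.
move=> hR hs hc y z yL zL; rewrite /upd.
case: (eqVneq y x) => [_|yx]; case: (eqVneq z x) => [_|zx].
- exact: tmatch_refl.
- by apply: hc; rewrite mem_filter /= zx zL.
- have yF : y \in filter (predC1 x) L0 by rewrite mem_filter /= yx yL.
  case: (hc y yF) => h1 h2 h3; split.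
  + exact: tmatch_side (hR y y yF yF).
  + by rewrite eq_sym h2 eq_sym.
  + by rewrite gadj_sym h3 gadj_sym.
- by apply: hR; rewrite mem_filter /= ?yx ?zx ?yL ?zL.
Qed.

Lemma game S1 S2 (V : seq nat) : size (undup V) <= 3 ->
  forall f, {subset vars f <= V} -> forall (e1 : nat -> gr S1) (e2 : nat -> gr S2),
  Rel (free_vars f) e1 e2 -> (holds e1 f <-> holds e2 f).
Proof.
move=> hV; elim => [x y|x y|||g IH|g IHg h IHh|g IHg h IHh|g IHg h IHh|x g IH|x g IH]
  hsub e1 e2 hR /=.
- have xL : x \in [:: x; y] by rewrite inE eqxx.
  have yL : y \in [:: x; y] by rewrite !inE eqxx orbT.
  case: (hR x y xL yL) => _ _ ha.
  by change (gadj (e1 x) (e1 y) <-> gadj (e2 x) (e2 y)); rewrite ha.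
- have xL : x \in [:: x; y] by rewrite inE eqxx.
  have yL : y \in [:: x; y] by rewrite !inE eqxx orbT.
  case: (hR x y xL yL) => _ he _.
  by split => H; apply/eqP; [rewrite -he | rewrite he]; apply/eqP.
- by [].
- by [].
- case: (IH hsub e1 e2 hR) => H1 H2; split => H H'; apply: H; [exact: H2 | exact: H1].
- have sg : {subset vars g <= V} by move=> z zg; apply: hsub; rewrite mem_cat zg.
  have sh : {subset vars h <= V} by move=> z zh; apply: hsub; rewrite mem_cat zh orbT.
  have Rg : Rel (free_vars g) e1 e2 by apply: Rel_sub hR => z zg; rewrite mem_cat zg.
  have Rh : Rel (free_vars h) e1 e2 by apply: Rel_sub hR => z zh; rewrite mem_cat zh orbT.
  case: (IHg sg e1 e2 Rg) => G1 G2; case: (IHh sh e1 e2 Rh) => H1 H2.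
  by split => -[A B]; split; auto.
- have sg : {subset vars g <= V} by move=> z zg; apply: hsub; rewrite mem_cat zg.
  have sh : {subset vars h <= V} by move=> z zh; apply: hsub; rewrite mem_cat zh orbT.
  have Rg : Rel (free_vars g) e1 e2 by apply: Rel_sub hR => z zg; rewrite mem_cat zg.
  have Rh : Rel (free_vars h) e1 e2 by apply: Rel_sub hR => z zh; rewrite mem_cat zh orbT.
  case: (IHg sg e1 e2 Rg) => G1 G2; case: (IHh sh e1 e2 Rh) => H1 H2.
  by split => -[A|B]; auto.
- have sg : {subset vars g <= V} by move=> z zg; apply: hsub; rewrite mem_cat zg.
  have sh : {subset vars h <= V} by move=> z zh; apply: hsub; rewrite mem_cat zh orbT.
  have Rg : Rel (free_vars g) e1 e2 by apply: Rel_sub hR => z zg; rewrite mem_cat zg.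
  have Rh : Rel (free_vars h) e1 e2 by apply: Rel_sub hR => z zh; rewrite mem_cat zh orbT.
  case: (IHg sg e1 e2 Rg) => G1 G2; case: (IHh sh e1 e2 Rh) => H1 H2.
  by split => A B; auto.
- have xV : x \in V by apply: hsub; rewrite inE eqxx.
  have hsg : {subset vars g <= V} by move=> z zg; apply: hsub; rewrite inE zg orbT.
  have hs : size (undup (filter (predC1 x) (free_vars g))) <= 2.
    have : size (x :: undup (filter (predC1 x) (free_vars g))) <= size (undup V).
      apply: uniq_leq_size.
        by rewrite /= undup_uniq andbT mem_undup mem_filter /= eqxx.
      move=> z; rewrite inE mem_undup => /orP[/eqP ->|]; rewrite mem_undup //.
      by rewrite mem_filter => /andP[_ /free_sub /hsg].
    by move=> h; rewrite -ltnS; exact: leq_trans h hV.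
  split.
  + case=> v Hv; case: (ext_list hs hR v) => d [hsd hd]; exists d.
    by apply: (proj1 (IH hsg (upd e1 x v) (upd e2 x d) (Rel_upd hR hsd hd))).
  + case=> d Hd; case: (ext_list hs (Rel_sym hR) d) => v [hsv hv]; exists v.
    apply: (proj2 (IH hsg (upd e1 x v) (upd e2 x d) _)) Hd.
    by apply: Rel_upd hR (esym hsv) _ => y yL; apply: tmatch_swap; apply: hv.
- have xV : x \in V by apply: hsub; rewrite inE eqxx.
  have hsg : {subset vars g <= V} by move=> z zg; apply: hsub; rewrite inE zg orbT.
  have hs : size (undup (filter (predC1 x) (free_vars g))) <= 2.
    have : size (x :: undup (filter (predC1 x) (free_vars g))) <= size (undup V).
      apply: uniq_leq_size.
        by rewrite /= undup_uniq andbT mem_undup mem_filter /= eqxx.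
      move=> z; rewrite inE mem_undup => /orP[/eqP ->|]; rewrite mem_undup //.
      by rewrite mem_filter => /andP[_ /free_sub /hsg].
    by move=> h; rewrite -ltnS; exact: leq_trans h hV.
  split.
  + move=> H d; case: (ext_list hs (Rel_sym hR) d) => v [hsv hv].
    apply: (proj1 (IH hsg (upd e1 x v) (upd e2 x d) _)) (H v).
    by apply: Rel_upd hR (esym hsv) _ => y yL; apply: tmatch_swap; apply: hv.
  + move=> H v; case: (ext_list hs hR v) => d [hsd hd].
    by apply: (proj2 (IH hsg (upd e1 x v) (upd e2 x d) (Rel_upd hR hsd hd))).
Qed.


Section Props.
Variable S : bstr.

Lemma deg_ge (v : gr S) : #|[set b | binc v.2 b]| <= #|[set u | @adj (gr S) v u]|.
Proof.
have inj : injective (fun b : bP S => ((~~ v.1, b) : gr S)) by move=> a b [].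
rewrite -(card_imset _ inj); apply: subset_leq_card; apply/subsetP => u.
case/imsetP => b; rewrite inE => hb ->; rewrite inE /= /gadj /=.
by case: (v.1); rewrite /= hb.
Qed.

Lemma gE1 s (a b : bP S) : binc a b -> gadj ((s, a) : gr S) (~~ s, b).
Proof. by rewrite /gadj /= => ->; case: s. Qed.
Lemma gE2 s (a b : bP S) : binc a b -> gadj ((~~ s, a) : gr S) (s, b).
Proof. by rewrite /gadj /= => ->; case: s. Qed.

Ltac fin_e cv sv := first [ done | apply: cv; done | apply: sv; done
  | apply: gE1; done | apply: gE2; done | apply: gE1; rewrite binc_sym; done
  | apply: gE2; rewrite binc_sym; done ].

Lemma conn_del (v : gr S) : connected_in (@adj (gr S)) ([set: gr S] :\ v).
Proof.
  set R := fun a b : gr S => [&& adj a b, a \in [set: gr S] :\ v & b \in [set: gr S] :\ v].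
  have step : forall a b : gr S, a != v -> b != v -> gadj a b -> R a b.
    by move=> a b av bv ab; apply/and3P; split; rewrite ?inE ?av ?bv.
  have cv : forall t (c : bP S), c != v.2 -> ((t, c) : gr S) != v.
    by move=> t c cn; apply/eqP => E; rewrite -E eqxx in cn.
  have sv : forall t (c : bP S), v.1 != t -> ((t, c) : gr S) != v.
    by move=> t c cn; apply/eqP => E; rewrite -E eqxx in cn.
  have same : forall s (b1 b2 : bP S), ((s, b1) : gr S) != v -> ((s, b2) : gr S) != v ->
      connect R (s, b1) (s, b2).
    move=> s b1 b2 h1 h2.
    case: (eqVneq b1 b2) => [<-|nb]; first exact: connect0.
    case: (eqVneq v.1 s) => [vs|vs].
      have [c [c1 c2]] := bE1 nb true true.
      have cv' : ((~~ s, c) : gr S) != v by apply/eqP => E; rewrite -E /= in vs; case: (s) vs.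
      apply: (@connect_trans _ R ((~~ s, c) : gr S)); apply: connect1; apply: step => //.
        by rewrite /gadj /= c1; case: (s).
      by rewrite /gadj /= binc_sym c2; case: (s).
    have [c1 [c1n c1b]] := bE3 v.2 b1 true.
    have [c2 [c2n c2b]] := bE3 v.2 b2 true.
    case: (eqVneq c1 c2) => [ec|nc].
      subst c2.
      apply: (@connect_trans _ R ((~~ s, c1) : gr S)); apply: connect1; apply: step; fin_e cv sv.
    have [d [d1 d2]] := bE1 nc true true.
    apply: (@connect_trans _ R ((~~ s, c1) : gr S)).
      by apply: connect1; apply: step; fin_e cv sv.
    apply: (@connect_trans _ R ((s, d) : gr S)).
      by apply: connect1; apply: step; fin_e cv sv.
    apply: (@connect_trans _ R ((~~ s, c2) : gr S)).
      by apply: connect1; apply: step; fin_e cv sv.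
    by apply: connect1; apply: step; fin_e cv sv.
  move=> [s a] [t b]; rewrite !inE => /andP[xv _] /andP[yv _].
  case: (eqVneq t s) => [ts|ts]; first by subst t; apply: same.
  have tE : t = ~~ s by move: ts; case: (t); case: (s).
  subst t.
  have [z [zn zb]] := bE3 v.2 b true.
  apply: (@connect_trans _ R ((s, z) : gr S)); first by apply: same => //; apply: cv.
  by apply: connect1; apply: step; fin_e cv sv.
Qed.

Lemma two_conn : two_connected (gr S).
Proof.
have [a1 [a1n _]] := bE3 (bP0 S) (bP0 S) true.
split.
- rewrite card_prod card_bool.
  have : 1 < #|bP S|.
    rewrite (cardD1 (bP0 S)) inE /= add1n ltnS lt0n; apply/pred0Pn; exists a1; by rewrite !inE a1n.
  move=> h; lia.
- move=> [s a] [t b] _ _.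
  have [w [wa wb]] := avoid2 a b.
  have := @conn_del (s, w) (s, a) (t, b).
  rewrite !inE /= !xpair_eqE !eqxx /= eq_sym wa (eq_sym b) (negbTE wb) andbF /= => /(_ isT isT).
  apply: connect_sub => x y /and3P[xy _ _]; apply: connect1; by rewrite xy !inE.
- exact: conn_del.
Qed.
End Props.

Module ProjM.
Import GRing.Theory.
Local Open Scope ring_scope.

Section Proj.
Variable F : finFieldType.
Definition vec := (F * F * F)%type.
Definition v0 : vec := (0, 0, 0).
Definition dot (u v : vec) : F := u.1.1 * v.1.1 + u.1.2 * v.1.2 + u.2 * v.2.
Definition scal (c : F) (v : vec) : vec := (c * v.1.1, c * v.1.2, c * v.2).
Definition vadd (u v : vec) : vec := (u.1.1 + v.1.1, u.1.2 + v.1.2, u.2 + v.2).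
Definition cross (u v : vec) : vec :=
  (u.1.2 * v.2 - u.2 * v.1.2, u.2 * v.1.1 - u.1.1 * v.2, u.1.1 * v.1.2 - u.1.2 * v.1.1).
Definition nv (v : vec) : vec :=
  if v.1.1 != 0 then scal v.1.1^-1 v else if v.1.2 != 0 then scal v.1.2^-1 v
  else scal v.2^-1 v.
Definition normp (v : vec) := (v != v0) && (nv v == v).

Lemma vnz (v : vec) : (v != v0) = [|| v.1.1 != 0, v.1.2 != 0 | v.2 != 0].
Proof. by case: v => [[x y] z]; rewrite /v0 !xpair_eqE /= !negb_and -orbA. Qed.

Lemma dot_sym u v : dot u v = dot v u.
Proof. by rewrite /dot; ring. Qed.
Lemma dot_scal c u v : dot (scal c u) v = c * dot u v.
Proof. by rewrite /dot /scal /=; ring. Qed.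
Lemma dot_add u w v : dot (vadd u w) v = dot u v + dot w v.
Proof. by rewrite /dot /vadd /=; ring. Qed.
Lemma dot0 v : dot v0 v = 0.
Proof. by rewrite /dot /=; ring. Qed.
Lemma dot_cross1 a b : dot (cross a b) a = 0.
Proof. by rewrite /dot /cross /=; ring. Qed.
Lemma dot_cross2 a b : dot (cross a b) b = 0.
Proof. by rewrite /dot /cross /=; ring. Qed.
Lemma cross_cross l a b :
  cross l (cross a b) = vadd (scal (dot l b) a) (scal (- dot l a) b).
Proof. by rewrite /cross /vadd /scal /dot /=; congr (_, _, _); ring. Qed.
Lemma scalA a b v : scal a (scal b v) = scal (a * b) v.
Proof. by rewrite /scal /=; congr (_, _, _); ring. Qed.
Lemma scal1 v : scal 1 v = v.
Proof. by case: v => [[x y] z]; rewrite /scal /= !mul1r. Qed.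

Lemma scal_nz c v : c != 0 -> v != v0 -> scal c v != v0.
Proof. by move=> hc; rewrite !vnz /scal /= !mulf_eq0 (negbTE hc). Qed.

Lemma nv_scal v : v != v0 -> exists2 c, c != 0 & nv v = scal c v.
Proof.
rewrite vnz /nv; case: ifP => [h _|_]; first by exists v.1.1^-1; rewrite ?invr_eq0.
case: ifP => [h _|_ /= h]; first by exists v.1.2^-1; rewrite ?invr_eq0.
by exists v.2^-1; rewrite ?invr_eq0.
Qed.

Lemma nv_scalI c v : c != 0 -> nv (scal c v) = nv v.
Proof.
move=> hc; case: v => [[x y] z]; rewrite /nv /scal /= !mulf_eq0 (negbTE hc) /=.
case: ifP => hx; first by congr (_, _, _); field; rewrite hc hx.
case: ifP => hy; first by congr (_, _, _); field; rewrite hc hy.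
move/negbFE/eqP: hx => ->; move/negbFE/eqP: hy => ->.
case: (eqVneq z 0) => [->|hz]; first by rewrite !(mulr0, mul0r, invr0).
by congr (_, _, _); field; rewrite hc hz.
Qed.

Lemma cross0 u w : u != v0 -> w != v0 -> cross u w = v0 ->
  exists2 c, c != 0 & w = scal c u.
Proof.
case: u w => [[x1 y1] z1] [[x2 y2] z2]; rewrite !vnz /cross /scal /= => hu hw.
case=> /subr0_eq e1 /subr0_eq e2 /subr0_eq e3.
case: (eqVneq x1 0) => [ex1|hx1].
  subst x1; move: hu; rewrite eqxx /= => hu.
  case: (eqVneq y1 0) => [ey1|hy1].
    subst y1; move: hu; rewrite eqxx /= => hz1.
    have ex2 : x2 = 0 by apply: (mulfI hz1); rewrite e2 !mulr0 mul0r.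
    have ey2 : y2 = 0 by apply: (mulfI hz1); rewrite -e1 !mulr0 mul0r.
    subst x2 y2; move: hw; rewrite eqxx /= => hz2.
    exists (z2 / z1); first by rewrite mulf_eq0 invr_eq0 negb_or hz2 hz1.
    by congr (_, _, _); rewrite ?mulr0 //; field.
  have ex2 : x2 = 0 by apply: (mulfI hy1); rewrite -e3 !mulr0 mul0r.
  subst x2.
  exists (y2 / y1).
    rewrite mulf_eq0 invr_eq0 (negbTE hy1) orbF; apply/eqP => ey2; subst y2.
    have ez : z2 = 0 by apply: (mulfI hy1); rewrite e1 !mulr0.
    by move: hw; rewrite ez eqxx.
  congr (_, _, _); rewrite ?mulr0 //; first by field.
  by apply: (mulfI hy1); rewrite e1; field.
exists (x2 / x1).
  rewrite mulf_eq0 invr_eq0 (negbTE hx1) orbF; apply/eqP => ex2; subst x2.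
  have ey : y2 = 0 by apply: (mulfI hx1); rewrite e3 !mulr0.
  have ez : z2 = 0 by apply: (mulfI hx1); rewrite -e2 !mulr0.
  by move: hw; rewrite ey ez eqxx.
congr (_, _, _); first by field.
  by apply: (mulfI hx1); rewrite e3; field.
by apply: (mulfI hx1); rewrite -e2; field.
Qed.

Definition P := {v : vec | normp v}.
Lemma nzP (a : P) : val a != v0.
Proof. by case: a => v /= /andP[]. Qed.
Lemma nvP (a : P) : nv (val a) = val a.
Proof. by case: a => v /= /andP[_ /eqP]. Qed.
Lemma nv_norm v : v != v0 -> normp (nv v).
Proof.
move=> h; case: (nv_scal h) => c hc E; rewrite /normp E nv_scalI // E eqxx andbT; exact: scal_nz.
Qed.
Lemma prop_eq (a b : P) c : c != 0 -> val a = scal c (val b) -> a = b.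
Proof. by move=> hc e; apply: val_inj; rewrite -nvP e nv_scalI // nvP. Qed.

Lemma e3_norm : normp (0, 0, 1).
Proof. by rewrite /normp /nv /= !eqxx /= ?oner_neq0 /= invr1 scal1 eqxx andbT vnz /= oner_neq0 ?orbT. Qed.
Lemma e2_norm : normp (0, 1, 0).
Proof. by rewrite /normp /nv /= !eqxx /= ?oner_neq0 /= invr1 scal1 eqxx andbT vnz /= oner_neq0 ?orbT. Qed.
Lemma e1_norm : normp (1, 0, 0).
Proof. by rewrite /normp /nv /= !eqxx /= ?oner_neq0 /= invr1 scal1 eqxx andbT vnz /= oner_neq0 ?orbT. Qed.
Definition e1P : P := exist (fun v : vec => normp v) _ e1_norm.
Definition e2P : P := exist (fun v : vec => normp v) _ e2_norm.
Definition e3P : P := exist (fun v : vec => normp v) _ e3_norm.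

Definition mkP (v : vec) : P := insubd e3P (nv v).
Lemma mkPE v : v != v0 -> val (mkP v) = nv v.
Proof. by move=> h; rewrite /mkP insubdK //; apply: nv_norm. Qed.
Lemma dot_nv v a : v != v0 -> (dot (nv v) a == 0) = (dot v a == 0).
Proof. by move=> h; case: (nv_scal h) => c hc ->; rewrite dot_scal mulf_eq0 (negbTE hc). Qed.

Definition pinc (a b : P) := dot (val a) (val b) == 0.
Lemma pinc_sym : symmetric pinc.
Proof. by move=> a b; rewrite /pinc dot_sym. Qed.

Lemma exists_off (v : vec) : v != v0 -> exists c : P, dot v (val c) != 0.
Proof.
rewrite vnz => /orP[h|/orP[h|h]].
- by exists e1P; rewrite /dot /= mulr1 !mulr0 !addr0.
- by exists e2P; rewrite /dot /= mulr1 !mulr0 add0r addr0.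
- by exists e3P; rewrite /dot /= mulr1 !mulr0 !add0r.
Qed.

Lemma other (b : P) : exists m : P, m != b.
Proof.
case: (eqVneq b e1P) => [->|h]; last by exists e1P; rewrite eq_sym.
exists e2P; apply/eqP => /(congr1 val) /= /eqP.
by rewrite !xpair_eqE eq_sym oner_eq0.
Qed.

Lemma cross_nz (a b : P) : a != b -> cross (val a) (val b) != v0.
Proof.
move=> ab; apply/eqP => e.
case: (cross0 (nzP a) (nzP b) e) => c hc E.
by move: ab; rewrite (prop_eq hc E) eqxx.
Qed.

Lemma line_uniq (a b l : P) : a != b -> pinc l a -> pinc l b ->
  val l = nv (cross (val a) (val b)).
Proof.
move=> ab /eqP la /eqP lb.
have : cross (val l) (cross (val a) (val b)) = v0.
  by rewrite cross_cross la lb oppr0 /vadd /scal /= !mul0r !addr0.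
case/(cross0 (nzP l) (cross_nz ab)) => c hc ->.
by rewrite nv_scalI // nvP.
Qed.

Definition join (a b : P) := mkP (cross (val a) (val b)).
Lemma join_inc1 a b : a != b -> pinc (join a b) a.
Proof. by move=> ab; rewrite /pinc mkPE ?cross_nz // dot_nv ?cross_nz // dot_cross1. Qed.
Lemma join_inc2 a b : a != b -> pinc (join a b) b.
Proof. by move=> ab; rewrite /pinc mkPE ?cross_nz // dot_nv ?cross_nz // dot_cross2. Qed.
Lemma join_uniq a b l : a != b -> pinc l a -> pinc l b -> l = join a b.
Proof.
by move=> ab la lb; apply: val_inj; rewrite mkPE ?cross_nz // (line_uniq ab la lb).
Qed.

Lemma pTF (a1 a2 : P) : a1 != a2 -> exists b, pinc a1 b /\ ~~ pinc a2 b.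
Proof.
move=> a12.
set L0 := join a1 a2.
case: (exists_off (nzP L0)) => c hc.
have ca1 : a1 != c.
  by apply/eqP => E; move: hc; rewrite -E; have := join_inc1 a12; rewrite /pinc => /eqP ->; rewrite eqxx.
exists (join a1 c); split; first by rewrite pinc_sym join_inc1.
apply/negP => h2.
have E : join a1 c = L0 by apply: join_uniq => //; rewrite ?join_inc1 // pinc_sym.
by move: hc; have := join_inc2 ca1; rewrite E /pinc => /eqP ->; rewrite eqxx.
Qed.

Lemma pE1 (a1 a2 : P) : a1 != a2 -> forall e1 e2 : bool,
  exists b, pinc a1 b = e1 /\ pinc a2 b = e2.
Proof.
move=> a12 [] [].
- by exists (join a1 a2); rewrite !(pinc_sym _ (join _ _)) join_inc1 ?join_inc2.
- by case: (pTF a12) => b [h1 h2]; exists b; rewrite h1 (negbTE h2).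
- have a21 : a2 != a1 by rewrite eq_sym.
  by case: (pTF a21) => b [h1 h2]; exists b; rewrite h1 (negbTE h2).
- case: (pTF a12) => w [w1 w2].
  have a21 : a2 != a1 by rewrite eq_sym.
  case: (pTF a21) => u [u1 u2].
  set v := vadd (val u) (val w).
  have d1 : dot v (val a1) != 0.
    by rewrite dot_add; move: w1 u2; rewrite /pinc !(dot_sym (val a1)) => /eqP -> ; rewrite addr0.
  have d2 : dot v (val a2) != 0.
    by rewrite dot_add; move: u1 w2; rewrite /pinc !(dot_sym (val a2)) => /eqP -> ; rewrite add0r.
  have vn : v != v0 by apply: contra d1 => /eqP ->; rewrite dot0.
  exists (mkP v); rewrite /pinc mkPE // !(dot_sym (val _) (nv v)) !dot_nv //.
  by rewrite (negbTE d1) (negbTE d2).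
Qed.

Lemma on_line (a b : P) : exists t, t != a /\ pinc t b.
Proof.
case: (boolP (pinc a b)) => hab.
- case: (exists_off (nzP a)) => m hm.
  have mb : b != m.
    by apply/eqP => E; move: hm hab; rewrite -E /pinc => /negbTE ->.
  exists (join b m); split; last exact: join_inc1.
  apply/eqP => E; have := join_inc2 mb; rewrite E /pinc => /eqP h.
  by rewrite h eqxx in hm.
- case: (other b) => m mb; have bm : b != m by rewrite eq_sym.
  exists (join b m); split; last exact: join_inc1.
  apply/eqP => E; have := join_inc1 bm; rewrite E => h.
  by rewrite h in hab.
Qed.

Lemma pE3 (a b : P) (e : bool) : exists a', a' != a /\ pinc a' b = e.
Proof.
case: e; first by case: (on_line a b) => t [ta tb]; exists t.
case: (boolP (pinc a b)) => hab.
- case: (exists_off (nzP b)) => c hc; exists c; split.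
    by apply/eqP => E; move: hc hab; rewrite E /pinc dot_sym => /negbTE ->.
  by rewrite /pinc dot_sym (negbTE hc).
- case: (on_line a b) => t [ta tb].
  set v := vadd (val a) (val t).
  have dv : dot v (val b) != 0.
    by rewrite dot_add (eqP tb) addr0.
  have vn : v != v0 by apply: contra dv => /eqP ->; rewrite dot0.
  exists (mkP v); split; last by rewrite /pinc mkPE // dot_nv // (negbTE dv).
  apply/eqP => E.
  have := mkPE vn; rewrite E.
  case: (nv_scal vn) => k hk -> Ea.
  have Et : val t = scal ((1 - k) / k) (val a).
    move: Ea; rewrite /v /vadd /scal; case: (val a) => [[x y] z]; case: (val t) => [[x' y'] z'] /=.
    case=> ex ey ez; congr (_, _, _); apply: (mulfI hk).
    + transitivity ((1 - k) * x); last by field.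
      by rewrite mulrBl mul1r {1}ex; ring.
    + transitivity ((1 - k) * y); last by field.
      by rewrite mulrBl mul1r {1}ey; ring.
    + transitivity ((1 - k) * z); last by field.
      by rewrite mulrBl mul1r {1}ez; ring.
  case: (eqVneq k 1) => [k1|k1].
    move: (nzP t); rewrite Et k1 subrr mul0r /scal !mul0r /v0 eqxx //.
  have : (1 - k) / k != 0.
    by rewrite mulf_eq0 invr_eq0 (negbTE hk) orbF subr_eq0 eq_sym.
  by move=> hc; move: ta; rewrite (prop_eq hc Et) eqxx.
Qed.

Definition Nb (x : P) := [set y : P | pinc x y].

Lemma degN (x y : P) : ~~ pinc x y -> (#|Nb x| <= #|Nb y|)%N.
Proof.
move=> hxy.
have ly : forall l, l \in Nb x -> l != y.
  by move=> l; rewrite inE => hl; apply/eqP => E; rewrite -E hl in hxy.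
have inj : {in Nb x &, injective (fun l => join l y)}.
  move=> l1 l2 h1 h2 /= E.
  have s1 := join_inc1 (ly _ h1).
  have s2 := join_inc1 (ly _ h2).
  rewrite -E in s2.
  have sy := join_inc2 (ly _ h1).
  have xs : x != join l1 y by apply/eqP => E'; rewrite E' sy in hxy.
  move: h1 h2; rewrite !inE => h1 h2.
  rewrite (@join_uniq x (join l1 y) l1 xs) ?(pinc_sym l1) //.
  by rewrite (@join_uniq x (join l1 y) l2 xs) ?(pinc_sym l2).
rewrite -(card_in_imset inj); apply: subset_leq_card; apply/subsetP => z.
by case/imsetP => l hl ->; rewrite inE pinc_sym join_inc2 // ly.
Qed.

Lemma degEq (x y : P) : #|Nb x| = #|Nb y|.
Proof.
have [z [zx zy]] : exists z, ~~ pinc z x /\ ~~ pinc z y.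
  case: (eqVneq x y) => [<-|xy].
    by case: (exists_off (nzP x)) => c hc; exists c; rewrite /pinc dot_sym hc.
  by case: (pE1 xy false false) => z [h1 h2]; exists z; rewrite pinc_sym h1 pinc_sym h2.
have l1 := degN zx.
have l2 : (#|Nb x| <= #|Nb z|)%N by apply: degN; rewrite pinc_sym.
have l3 := degN zy.
have l4 : (#|Nb y| <= #|Nb z|)%N by apply: degN; rewrite pinc_sym.
by apply/eqP; rewrite eqn_leq (leq_trans l2 l3) (leq_trans l4 l1).
Qed.

Lemma degF (x : P) : (#|F| <= #|Nb x|)%N.
Proof.
rewrite (degEq x e3P).
have nz : forall t : F, (1, t, 0) != v0 by move=> t; rewrite vnz /= oner_neq0.
have nv1 : forall t : F, nv (1, t, 0) = (1, t, 0).
  by move=> t; rewrite /nv /= oner_neq0 invr1 scal1.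
have inj : injective (fun t : F => mkP (1, t, 0)).
  move=> t1 t2 /(congr1 val); rewrite !mkPE // !nv1; by case.
have h := card_imset [set: F] inj; rewrite cardsT in h; rewrite -h; apply: subset_leq_card; apply/subsetP => z.
case/imsetP => t _ ->; rewrite inE /pinc mkPE // nv1 /dot /=.
by rewrite !mul0r mulr0 !addr0.
Qed.
End Proj.

End ProjM.
Import ProjM.

Lemma avoid_card (T : finType) : 2 < #|T| -> forall i j : T, exists z, z != i /\ z != j.
Proof.
move=> hT i j.
have : ~~ ([set: T] \subset [set i; j]).
  apply/negP => /subset_leq_card; rewrite cardsT cards2.
  by case: (i != j) => /= h; move: (leq_trans hT h).
case/subsetPn => z _; rewrite !inE => /norP[zi zj]; by exists z.
Qed.

Section Rook.
Variable n : nat.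
Definition RP := ('I_n.+3 * 'I_n.+3)%type.
Definition rinc (a b : RP) := (a.1 == b.1) || (a.2 == b.2).
Lemma rinc_sym : symmetric rinc.
Proof. by move=> a b; rewrite /rinc eq_sym (eq_sym a.2). Qed.
Lemma avI (i j : 'I_n.+3) : exists z, z != i /\ z != j.
Proof. by apply: avoid_card; rewrite card_ord. Qed.

Lemma rTF (a1 a2 : RP) : a1 != a2 -> exists b, rinc a1 b /\ ~~ rinc a2 b.
Proof.
case: a1 a2 => [x1 y1] [x2 y2] ne.
case: (eqVneq x1 x2) => [ex|nx].
  subst x2.
  have ny : y1 != y2 by apply: contraNneq ne => ->.
  case: (avI x1 x1) => z [zx _].
  exists (z, y1); rewrite /rinc /= eqxx orbT; split => //.
  by rewrite negb_or eq_sym zx eq_sym ny.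
case: (avI y2 y2) => z [zy _].
exists (x1, z); rewrite /rinc /= eqxx; split => //.
by rewrite negb_or eq_sym nx eq_sym zy.
Qed.

Lemma rE1 (a1 a2 : RP) : a1 != a2 -> forall e1 e2 : bool,
  exists b, rinc a1 b = e1 /\ rinc a2 b = e2.
Proof.
move=> ne [] [].
- by exists (a1.1, a2.2); rewrite /rinc /= !eqxx orbT.
- by case: (rTF ne) => b [h1 h2]; exists b; rewrite h1 (negbTE h2).
- have ne' : a2 != a1 by rewrite eq_sym.
  by case: (rTF ne') => b [h1 h2]; exists b; rewrite h1 (negbTE h2).
- case: (avI a1.1 a2.1) => z [z1 z2]; case: (avI a1.2 a2.2) => w [w1 w2].
  by exists (z, w); rewrite /rinc /= !(eq_sym _ z) !(eq_sym _ w) (negbTE z1) (negbTE z2) (negbTE w1) (negbTE w2).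
Qed.

Lemma rE3 (a b : RP) (e : bool) : exists a', a' != a /\ rinc a' b = e.
Proof.
case: e.
  case: (avI a.2 a.2) => z [za _]; exists (b.1, z); rewrite /rinc /= eqxx; split => //.
  by apply: contraNneq za => <-.
case: (avI b.1 a.1) => z [zb za]; case: (avI b.2 b.2) => w [wb _].
exists (z, w); rewrite /rinc /= (negbTE zb) (negbTE wb); split => //.
by apply: contraNneq za => <-.
Qed.

Definition rookS := BStr rinc_sym rE1 rE3 (ord0, ord0).

Lemma rdeg (a : RP) : n.+3 <= #|[set b | rinc a b]|.
Proof.
have inj : injective (fun z : 'I_n.+3 => ((a.1, z) : RP)) by move=> x y [].
have h := card_imset [set: 'I_n.+3] inj; rewrite cardsT card_ord in h; apply: leq_trans (eq_leq (esym h)) _.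
apply: subset_leq_card; apply/subsetP => z; case/imsetP => t _ ->.
by rewrite inE /rinc /= eqxx.
Qed.
End Rook.


Definition Phi4 := FExists 0 (FExists 1 (FExists 2 (FExists 3
  (FAnd (FAdj 0 1) (FAnd (FAdj 1 2) (FAnd (FAdj 2 3) (FAnd (FAdj 3 0)
  (FAnd (FNot (FEq 0 2)) (FNot (FEq 1 3)))))))))).

Lemma adj_neq (G : sgraph) (u v : G) : adj u v -> u != v.
Proof. by move=> h; apply/eqP => E; rewrite E (@adj_irrefl G) in h. Qed.

Definition o4 (i : nat) (h : i < 4) : 'I_4 := Ordinal h.

Lemma Phi4_ok (G : sgraph) (v : G) : models G Phi4 <-> contains_subgraph G C4.
Proof.
split.
- move=> hm; case: (hm (fun _ => v)) => x0 [x1 [x2 [x3]]].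
  rewrite /upd /= => [[a01 [a12 [a23 [a30 [n02 n13]]]]]].
  have d01 := adj_neq a01; have d12 := adj_neq a12; have d23 := adj_neq a23.
  have d30 := adj_neq a30.
  have d02 : x0 != x2 by apply/eqP.
  have d13 : x1 != x3 by apply/eqP.
  exists (fun i : 'I_4 => nth x0 [:: x0; x1; x2; x3] i); split.
  + move=> [[|[|[|[|i]]]] hi] [[|[|[|[|j]]]] hj] //= E; try (by apply: val_inj);
    exfalso; move: d01 d12 d23 d30 d02 d13; rewrite E ?eqxx //.
  + move=> [[|[|[|[|i]]]] hi] [[|[|[|[|j]]]] hj] //=; rewrite /C4_adj /= => _;
    rewrite // (@adj_sym G) //.
- case=> f [fi fa] env /=.
  exists (f (o4 (isT : 0 < 4))), (f (o4 (isT : 1 < 4))), (f (o4 (isT : 2 < 4))), (f (o4 (isT : 3 < 4))).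
  rewrite /upd /=; split; first exact: fa.
  split; first exact: fa.
  split; first exact: fa.
  split; first exact: fa.
  by split => /fi.
Qed.

Definition projS (F : finFieldType) : bstr :=
  BStr (@pinc_sym F) (@pE1 F) (@pE3 F) (e3P F).

Lemma rook_C4 (k : nat) : contains_subgraph (gr (rookS k)) C4.
Proof.
pose a : 'I_k.+3 := @Ordinal k.+3 0 isT.
pose b : 'I_k.+3 := @Ordinal k.+3 1 isT.
have ab : (a == b) = false by [].
pose f := fun i : 'I_4 => nth (true, (a, a)) [:: (true, (a, a)); (false, (a, b)); (true, (b, b)); (false, (b, a))] i.
exists (f : 'I_4 -> gr (rookS k)); split.
- move=> [[|[|[|[|i]]]] hi] [[|[|[|[|j]]]] hj] //= E; try (by apply: val_inj);
  exfalso; move: E ab; rewrite /f /= => -[] //; move=> -> //; rewrite eqxx.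
- move=> [[|[|[|[|i]]]] hi] [[|[|[|[|j]]]] hj] //=; rewrite /C4_adj /= => _;
  by rewrite /gadj /rinc /= ?eqxx ?orbT.
Qed.

Lemma proj_noC4 (F : finFieldType) : ~ contains_subgraph (gr (projS F)) C4.
Proof.
case=> f [fi fa].
have e01 := fa (o4 (isT : 0 < 4)) (o4 (isT : 1 < 4)) isT.
have e12 := fa (o4 (isT : 1 < 4)) (o4 (isT : 2 < 4)) isT.
have e23 := fa (o4 (isT : 2 < 4)) (o4 (isT : 3 < 4)) isT.
have e30 := fa (o4 (isT : 3 < 4)) (o4 (isT : 0 < 4)) isT.
have n02 : f (o4 (isT : 0 < 4)) != f (o4 (isT : 2 < 4)) by apply/eqP => /fi.
have n13 : f (o4 (isT : 1 < 4)) != f (o4 (isT : 3 < 4)) by apply/eqP => /fi.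
move: e01 e12 e23 e30 n02 n13.
case: (f (o4 _)) => s0 p0; case: (f (o4 _)) => s1 p1; case: (f (o4 _)) => s2 p2;
  case: (f (o4 _)) => s3 p3.
rewrite /= /gadj /= => /andP[d01 i01] /andP[d12 i12] /andP[d23 i23] /andP[d30 i30] n02.
have s02 : s0 = s2 by move: d01 d12; case: (s0); case: (s1); case: (s2).
have s13 : s1 = s3 by move: d12 d23; case: (s1); case: (s2); case: (s3).
subst s2 s3.
have pn : p0 != p2 by apply: contra n02 => /eqP ->.
have E1 : p1 = join p0 p2 by apply: join_uniq; rewrite // pinc_sym.
have E3 : p3 = join p0 p2 by apply: join_uniq; rewrite // pinc_sym.
by rewrite E1 E3 eqxx.
Qed.

Theorem proposition18 : W'tw_eq C4 4.
Proof.
split.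
- exists Phi4, 0; split => //.
  move=> G [hc _ _] _.
  have : 0 < #|G| by apply: leq_trans hc.
  case/card_gt0P => v _; exact: Phi4_ok.
- move=> m [Phi [k [hs hw hdef]]].
  rewrite leqNgt; apply/negP => hm.
  have [p kp pp] := prime_above k.
  pose G := gr (rookS k).
  pose H := gr (projS 'F_p).
  have tG : tw_at_least G k.
    apply: (@tw_from_deg G k (true, (ord0, ord0))) => v.
    apply: leq_trans (deg_ge v).
    by apply: leq_trans (rdeg v.2); rewrite leqW // leqW // leqW.
  have tH : tw_at_least H k.
    apply: (@tw_from_deg H k (true, e3P _)) => v.
    apply: leq_trans (deg_ge v).
    apply: leq_trans (degF v.2).
    by rewrite card_Fp // ltnW.
  have mG : models G Phi by apply/(hdef G (two_conn _) tG); exact: rook_C4.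
  have mH : models H Phi.
    move=> e2.
    have hV : size (undup (vars Phi)) <= 3 by rewrite -/(var_width Phi) hw -ltnS.
    have hR : Rel (free_vars Phi) (fun _ : nat => ((true, (ord0, ord0)) : G)) e2.
      by rewrite hs => x y; rewrite in_nil.
    exact: (proj1 (@game (rookS k) (projS _) (vars Phi) hV Phi (fun x h => h) _ e2 hR) (mG _)).
  by apply: (@proj_noC4 'F_p); apply/(hdef H (two_conn _) tH).
Qed.
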